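(* Consider the car-following system with state $x=(D,v,v_{\rm L})\in\mathbb{R}^3$: $$\dot D = v_{\rm L}-v,\qquad \dot v = u - p(v),\qquad \dot v_{\rm L} = a_{\rm L}.$$ Here $p$ is locally Lipschitz with $p(v)\ge0$, and $a_{\rm L}$ is the leader's acceleration, a given exogenous input. The system is driven by the connected cruise controller $$u=k_{\rm d}(x)=A\big(V(D)-v\big)+B\big(W(v_{\rm L})-v\big)+Ca_{\rm L}$$ with $A,B,C\ge 0$, where $$V(D)=\min\{\kappa(D-D_{\rm st}),v_{\rm max}\}, \qquad W(v_{\rm L})=\min\{v_{\rm L},v_{\rm max}\}.$$ The constants satisfy $\kappa>0$, $v_{\rm max}>0$ and $D_{\rm st}\in\mathbb{R}$. Let $D_{\rm sf}\in\mathbb{R}$ and $T_{\rm c}>0$, and set $\bar\kappa=1/T_{\rm c}$. Define $$\mathcal{S}_{\rm D}=\{x: D-D_{\rm sf}\ge0\},\qquad \mathcal{S}_{\rm TTC}=\{x:\bar\kappa(D-D_{\rm sf})+v_{\rm L}-v\ge 0\}.$$ Assume the following: - there is a class-$\mathcal{K}$ function $\gamma$ such that $a_{\rm L}(t)\ge-\gamma(v_{\rm L}(t))$ along the solution; - there is $\bar v\ge0$ such that $v(t),v_{\rm L}(t)\in[0,\bar v]$ along the solution; - $D_{\rm st}>D_{\rm sf}$, $\bar\kappa\ge\kappa$ and $C\le 1$; - the gains satisfy $$A\kappa(D_{\rm st}-D_{\rm sf})+\min\{0,B-\bar\kappa\}\,\bar v+\min_{v_{\rm L}\in[0,\bar v]}\Big[(\bar\kappa-B+A)v_{\rm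 L}-(1-C)\gamma(v_{\rm L})\Big]\ \ge\ 0.$$ Then the closed loop is safe with respect to $\mathcal{S}_{\rm D}\cap\mathcal{S}_{\rm TTC}$: every such solution with $x(0)\in\mathcal{S}_{\rm D}\cap\mathcal{S}_{\rm TTC}$ satisfies $x(t)\in\mathcal{S}_{\rm D}\cap\mathcal{S}_{\rm TTC}$ for all $t\ge 0$.
   Context: A function $\gamma:[0,\infty)\to[0,\infty)$ is of class $\mathcal{K}$ if it is continuous, strictly increasing, and satisfies $\gamma(0)=0$. Standing assumption: solutions of the closed loop system exist and are unique for all $t\ge0$. *)

(* Defs.v *)
From HB Require Import structures.
From mathcomp Require Import all_boot all_order all_algebra.
From mathcomp Require Import all_classical all_reals all_analysis.
Set Implicit Arguments. Unset Strict Implicit. Unset Printing Implicit Defensive.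
Import Order.TTheory GRing.Theory Num.Theory.
Import numFieldNormedType.Exports.
Local Open Scope classical_set_scope.
Local Open Scope ring_scope.

Definition class_K {R : realType} (gamma : R -> R) : Prop :=
  [/\ {within `[0, +oo[, continuous gamma},
      (forall a b : R, 0 <= a -> a < b -> gamma a < gamma b)
    & gamma 0 = 0].

Definition locally_lipschitz {R : realType} (p : R -> R) : Prop :=
  forall x : R, exists2 r : R, 0 < r & exists L : R,
    forall y z : R, `|y - x| < r -> `|z - x| < r -> `|p y - p z| <= L * `|y - z|.

Definition Vpol {R : realType} (kappa Dst vmax D : R) : R :=
  Num.min (kappa * (D - Dst)) vmax.

Definition Wpol {R : realType} (vmax vL : R) : R := Num.min vL vmax.

Definition kd {R : realType} (A B C kappa Dst vmax : R) (D v vL aL : R) : R :=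
  A * (Vpol kappa Dst vmax D - v) + B * (Wpol vmax vL - v) + C * aL.

Definition in_SD {R : realType} (Dsf D : R) : Prop := 0 <= D - Dsf.
Definition in_STTC {R : realType} (Tc Dsf D v vL : R) : Prop :=
  0 <= Tc^-1 * (D - Dsf) + vL - v.

(* Main.v *)
From HB Require Import structures.
From mathcomp Require Import all_boot all_order all_algebra.
From mathcomp Require Import all_classical all_reals all_analysis.
From mathcomp Require Import ring lra.
Require Import Defs.
Import Order.TTheory GRing.Theory Num.Theory.
Import numFieldNormedType.Exports.
Local Open Scope classical_set_scope.
Local Open Scope ring_scope.
Section H.
Context {R : realType}.
Implicit Types (f g : R -> R) (x c df dg : R).
Lemma dD_ {f g x df dg} : is_derive x 1 f df -> is_derive x 1 g dg ->
  is_derive x 1 (fun r => f r + g r) (df + dg).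
Proof. move=> F G; exact: is_deriveD. Qed.
Lemma dB {f g x df dg} : is_derive x 1 f df -> is_derive x 1 g dg ->
  is_derive x 1 (fun r => f r - g r) (df - dg).
Proof. move=> F G; exact: is_deriveB. Qed.
Lemma dM {f g x df dg} : is_derive x 1 f df -> is_derive x 1 g dg ->
  is_derive x 1 (fun r => f r * g r) (f x * dg + g x * df).
Proof. move=> F G; exact: is_deriveM. Qed.
Lemma dZ c {f x df} : is_derive x 1 f df ->
  is_derive x 1 (fun r => c * f r) (c * df).
Proof. move=> F; exact: is_deriveZ. Qed.
Lemma dC c x : is_derive x 1 (fun _ => c) 0.
Proof. exact: is_derive_cst. Qed.
Lemma dE a x : is_derive x 1 (fun r => expR (a * r)) (a * expR (a * x)).
Proof.
have h : is_derive x 1 (fun r : R => a * r) a.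
  apply: is_derive_eq; last exact: mulr1.
have := @is_derive1_comp R expR (fun r => a * r) x (expR (a*x)) a _ h.
move=> H; exact: (is_derive_eq (H (is_derive_expR _)) (mulrC _ _)).
Qed.
Lemma rcont f x : 0 <= x -> {within `[0, +oo[, continuous f} ->
  forall e, 0 < e -> exists2 d, 0 < d & forall y, x <= y <= x + d -> `|f y - f x| < e.
Proof.
move=> x0 /subspace_continuousP /(_ x) fc e e0.
have : `[0, +oo[%classic x by rewrite /= in_itv /= x0.
move=> /fc /cvgrPdist_lt /(_ e e0).
rewrite near_withinE => /nbhs_ballP [d /= d0 H].
exists (d/2); first by lra.
move=> y /andP[xy yx].
rewrite distrC; apply: (H y).
  rewrite /ball /= distrC ger0_norm; [lra | by rewrite subr_ge0].
by rewrite in_itv /= andbT; lra.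
Qed.
Lemma key (A B C kappa vmax Dst Dsf k vbar g aL pv D v vL b : R) :
  0 <= A -> 0 <= B -> C <= 1 -> kappa <= k -> 0 <= pv -> - g <= aL ->
  0 <= v <= vbar ->
  0 <= A * kappa * (Dst - Dsf) + Num.min 0 (B - k) * vbar
          + ((k - B + A) * vL - (1 - C) * g) ->
  0 <= b -> - b <= D - Dsf ->
  - (A * (k - kappa)) * b <=
  k * (vL - v) + aL - (kd A B C kappa Dst vmax D v vL aL - pv)
   + A * (k * (D - Dsf) + vL - v).
Proof.
move=> A0 B0 C1 kk p0 ga /andP[v0 vb] hg b0 hb.
rewrite /kd /Vpol /Wpol.
have h1 : A * Num.min (kappa * (D - Dst)) vmax <= A * (kappa * (D - Dst)).
  by apply: ler_wpM2l => //; rewrite ge_min lexx.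
have h2 : B * Num.min vL vmax <= B * vL.
  by apply: ler_wpM2l => //; rewrite ge_min lexx.
have h3 : (1 - C) * (- g) <= (1 - C) * aL by apply: ler_wpM2l => //; lra.
have h4 : Num.min 0 (B - k) * vbar <= (B - k) * v.
  have [h|h] := leP 0 (B - k).
    by rewrite mul0r; apply: mulr_ge0.
  by rewrite ler_wnM2l //; apply: ltW.
have h5 : 0 <= (A * (k - kappa)) * (D - Dsf + b).
  by apply: mulr_ge0; [apply: mulr_ge0 => //; lra | lra].
lra.
Qed.
Lemma lim0 (a c : R) : 0 < c -> (forall eps, 0 < eps -> 0 < a + eps * c) -> 0 <= a.
Proof.
move=> c0 H; rewrite leNgt; apply/negP => a0.
have hp : 0 < - a / (2 * c) by apply: divr_gt0; lra.
have := H _ hp.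
have -> : - a / (2 * c) * c = - a / 2.
  by field; rewrite gt_eqF.
lra.
Qed.
End H.

Theorem theorem4 (R : realType)
  (p gamma : R -> R) (A B C kappa vmax Dst Dsf Tc vbar : R)
  (D v vL aL : R -> R) :
  (* model data *)
  locally_lipschitz p -> (forall s : R, 0 <= p s) ->
  0 <= A -> 0 <= B -> 0 <= C ->
  0 < kappa -> 0 < vmax -> 0 < Tc ->
  (* (D, v, vL) is a closed-loop solution on [0, oo) driven by the input aL *)
  {within `[0, +oo[, continuous D} ->
  {within `[0, +oo[, continuous v} ->
  {within `[0, +oo[, continuous vL} ->
  (forall t : R, 0 < t -> is_derive t 1 D (vL t - v t)) ->
  (forall t : R, 0 < t -> is_derive t 1 v
       (kd A B C kappa Dst vmax (D t) (v t) (vL t) (aL t) - p (v t))) ->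
  (forall t : R, 0 < t -> is_derive t 1 vL (aL t)) ->
  (* assumptions *)
  class_K gamma ->
  (forall t : R, 0 <= t -> - gamma (vL t) <= aL t) ->
  0 <= vbar ->
  (forall t : R, 0 <= t -> 0 <= v t <= vbar /\ 0 <= vL t <= vbar) ->
  Dsf < Dst -> kappa <= Tc^-1 -> C <= 1 ->
  (forall y : R, 0 <= y <= vbar ->
     0 <= A * kappa * (Dst - Dsf) + Num.min 0 (B - Tc^-1) * vbar
          + ((Tc^-1 - B + A) * y - (1 - C) * gamma y)) ->
  (* initial condition in S_D ∩ S_TTC *)
  in_SD Dsf (D 0) -> in_STTC Tc Dsf (D 0) (v 0) (vL 0) ->
  forall t : R, 0 <= t -> in_SD Dsf (D t) /\ in_STTC Tc Dsf (D t) (v t) (vL t).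

Proof.
move=> _ p0 A0 B0 C0 ka0 vm0 Tc0 cD cv cvL dD dv dvL _ ga vb0 bnd DD kk C1 hg i1 i2.
set k := Tc^-1 in kk hg i2 *.
have k0 : 0 < k by rewrite /k invr_gt0.
set K := A * (k - kappa).
have K0 : 0 <= K by apply: mulr_ge0 => //; lra.
set lam := K + 2.
have lam0 : 0 < lam by rewrite /lam; lra.
pose e r := expR (lam * r).
have e0 r : 0 < e r by exact: expR_gt0.
pose H1 eps r := D r - Dsf + eps * e r.
pose H2 eps r := k * (D r - Dsf) + vL r - v r + eps * e r.
have claim : forall eps, 0 < eps -> forall t, 0 <= t -> 0 < H1 eps t /\ 0 < H2 eps t.
  move=> eps eps0.
  pose P s := forall r, 0 <= r <= s -> 0 < H1 eps r /\ 0 < H2 eps r.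
  have P0 : P 0.
    move=> r r0; have -> : r = 0 by lra.
    rewrite /H1 /H2 /e mulr0 expR0 mulr1.
    move: i1 i2; rewrite /in_SD /in_STTC -/k => i1 i2; split; lra.
  suff : forall t, 0 <= t -> P t.
    move=> H t t0; apply: (H t t0); lra.
  apply: contrapT => /existsNP [t1 /not_implyP [t10 nP]].
  pose S := [set s | 0 <= s /\ P s].
  have ubS : ubound S t1.
    move=> s [s0 Ps]; rewrite leNgt; apply/negP => st.
    by apply: nP => r /andP[r0 rt]; apply: Ps; apply/andP; split => //; lra.
  have hS : has_sup S by split; [exists 0; split | exists t1].
  set T := sup S.
  have T0 : 0 <= T by apply: sup_upper_bound => //; split.
  have Pb : forall r, 0 <= r < T -> 0 < H1 eps r /\ 0 < H2 eps r.
    move=> r /andP[r0 rT].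
    have [s [s0 Ps] ls] := @sup_adherent R S (T - r) ltac:(lra) hS.
    by apply: Ps; apply/andP; split => //; rewrite /T in ls; lra.
  have PT : 0 < H1 eps T /\ 0 < H2 eps T.
    have [Tz|Tp] := eqVneq T 0.
      by rewrite Tz; apply: P0; lra.
    have Tpos : 0 < T by rewrite lt_neqAle eq_sym Tp T0.
    have hT2 : T / 2 < T by lra.
    have dH1 (c : R) : 0 < c -> is_derive c 1 (H1 eps) ((vL c - v c - 0) + eps * (lam * e c)).
      move=> c0; rewrite /H1 /e; exact: (dD_ (dB (dD c c0) (dC Dsf c)) (dZ eps (dE lam c))).
    have dH2 (c : R) : 0 < c -> is_derive c 1 (H2 eps)
        (k * ((vL c - v c) - 0) + aL c - (kd A B C kappa Dst vmax (D c) (v c) (vL c) (aL c) - p (v c))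
         + eps * (lam * e c)).
      move=> c0; rewrite /H2 /e.
      exact: (dD_ (dB (dD_ (dZ k (dB (dD c c0) (dC Dsf c))) (dvL c c0)) (dv c c0)) (dZ eps (dE lam c))).
    pose G1 (r : R) := expR (k * r) * H1 eps r.
    pose G2 (r : R) := expR (A * r) * H2 eps r.
    pose dG1 (c : R) := expR (k * c) * ((vL c - v c - 0) + eps * (lam * e c)) + H1 eps c * (k * expR (k * c)).
    pose dG2 (c : R) := expR (A * c) * (k * ((vL c - v c) - 0) + aL c
       - (kd A B C kappa Dst vmax (D c) (v c) (vL c) (aL c) - p (v c)) + eps * (lam * e c))
       + H2 eps c * (A * expR (A * c)).
    have dG1P (c : R) : 0 < c -> is_derive c 1 G1 (dG1 c).
      by move=> c0; exact: (dM (dE k c) (dH1 c c0)).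
    have dG2P (c : R) : 0 < c -> is_derive c 1 G2 (dG2 c).
      by move=> c0; exact: (dM (dE A c) (dH2 c c0)).
    have itv_pos (c : R) : c \in `]T/2, T[ -> 0 < c.
      by rewrite in_itv /= => /andP[? ?]; lra.
    have itvc_pos (c : R) : c \in `[T/2, T] -> 0 < c.
      by rewrite in_itv /= => /andP[? ?]; lra.
    have cont1 : {within `[T/2, T], continuous G1}.
      apply: derivable_within_continuous => c ci.
      by case: (dG1P c (itvc_pos c ci)).
    have cont2 : {within `[T/2, T], continuous G2}.
      apply: derivable_within_continuous => c ci.
      by case: (dG2P c (itvc_pos c ci)).
    have [c1 c1i E1] := MVT hT2 (fun c ci => dG1P c (itv_pos c ci)) cont1.
    have [c2 c2i E2] := MVT hT2 (fun c ci => dG2P c (itv_pos c ci)) cont2.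
    move: c1i c2i; rewrite !in_itv /= => /andP[c1a c1b] /andP[c2a c2b].
    have [Ph1 Ph2] := Pb (T/2) ltac:(clear -Tpos; apply/andP; split; lra).
    have [Pc11 Pc12] := Pb c1 ltac:(clear -c1a c1b T0; apply/andP; split; lra).
    have [Pc21 Pc22] := Pb c2 ltac:(clear -c2a c2b T0; apply/andP; split; lra).
    have g1pos : 0 < dG1 c1.
      have -> : dG1 c1 = expR (k * c1) * (H2 eps c1 + eps * e c1 * (lam + k - 1)).
        by rewrite /dG1 /H1 /H2; ring.
      apply: mulr_gt0; first exact: expR_gt0.
      have : 0 < eps * e c1 * (lam + k - 1).
        by apply: mulr_gt0; [apply: mulr_gt0 | rewrite /lam; clear -K0 k0; lra].
      move: Pc12; clear -eps0; lra.
    have g2pos : 0 < dG2 c2.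
      have [/andP[v0 vb] /andP[vL0 vLb]] := bnd c2 ltac:(clear -c2a T0; lra).
      have hb : - (eps * e c2) <= D c2 - Dsf by move: Pc21; rewrite /H1; clear -eps0; lra.
      have kk2 := @key R A B C kappa vmax Dst Dsf k vbar (gamma (vL c2)) (aL c2)
        (p (v c2)) (D c2) (v c2) (vL c2) (eps * e c2) A0 B0 C1 kk (p0 _)
        (ga c2 ltac:(clear -c2a T0; lra)) ltac:(by apply/andP) (hg (vL c2) ltac:(by apply/andP))
        (ltW (mulr_gt0 eps0 (e0 c2))) hb.
      have -> : dG2 c2 = expR (A * c2) * ((k * (vL c2 - v c2) + aL c2 -
         (kd A B C kappa Dst vmax (D c2) (v c2) (vL c2) (aL c2) - p (v c2))
         + A * (k * (D c2 - Dsf) + vL c2 - v c2)) + eps * e c2 * (lam + A)).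
        by rewrite /dG2 /H2; ring.
      apply: mulr_gt0; first exact: expR_gt0.
      move: kk2.
      have : 0 < eps * e c2 * 2 by apply: mulr_gt0 => //; apply: mulr_gt0.
      have : 0 <= eps * e c2 * A by apply: mulr_ge0 => //; apply: ltW; apply: mulr_gt0.
      rewrite /lam /K; clear -eps0; lra.
    have G1h : 0 < G1 (T/2) by apply: mulr_gt0; [exact: expR_gt0 | exact: Ph1].
    have G2h : 0 < G2 (T/2) by apply: mulr_gt0; [exact: expR_gt0 | exact: Ph2].
    have G1T : 0 < G1 T.
      have : 0 < dG1 c1 * (T - T / 2) by apply: mulr_gt0 => //; clear -Tpos; lra.
      move: E1 G1h; clear -Tpos; lra.
    have G2T : 0 < G2 T.
      have : 0 < dG2 c2 * (T - T / 2) by apply: mulr_gt0 => //; clear -Tpos; lra.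
      move: E2 G2h; clear -Tpos; lra.
    by split; [move: G1T; rewrite /G1 pmulr_rgt0 ?expR_gt0 | move: G2T; rewrite /G2 pmulr_rgt0 ?expR_gt0].
  have [H1T H2T] := PT.
  have h3 : 0 < H2 eps T / 3 by apply: divr_gt0.
  have [d1 d10 hd1] := rcont _ _ T0 cD _ H1T.
  have [d2 d20 hd2] := rcont _ _ T0 cD _ (divr_gt0 h3 k0).
  have [d3 d30 hd3] := rcont _ _ T0 cvL _ h3.
  have [d4 d40 hd4] := rcont _ _ T0 cv _ h3.
  pose d := Num.min d1 (Num.min d2 (Num.min d3 d4)).
  have dd1 : d <= d1 by rewrite /d ge_min lexx.
  have dd2 : d <= d2 by rewrite /d !ge_min lexx !orbT.
  have dd3 : d <= d3 by rewrite /d !ge_min lexx !orbT.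
  have dd4 : d <= d4 by rewrite /d !ge_min lexx !orbT.
  have d0 : 0 < d by rewrite /d !lt_min d10 d20 d30 d40.
  have Sd : S (T + d).
    split; first lra.
    move=> r /andP[r0 rTd].
    have [rT|Tr] := ltP r T; first by apply: Pb; apply/andP.
    have a1 := hd1 r ltac:(clear -Tr rTd dd1; apply/andP; split; lra).
    have a2 := hd2 r ltac:(clear -Tr rTd dd2; apply/andP; split; lra).
    have a3 := hd3 r ltac:(clear -Tr rTd dd3; apply/andP; split; lra).
    have a4 := hd4 r ltac:(clear -Tr rTd dd4; apply/andP; split; lra).
    rewrite ltr_pdivlMr // in a2.
    have a2' : `|k * (D r - D T)| < H2 eps T / 3 by rewrite normrM gtr0_norm // mulrC.
    have ee : eps * e T <= eps * e r.
      apply: ler_wpM2l; first exact: ltW.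
      by rewrite /e ler_expR; apply: ler_wpM2l; [exact: ltW | ].
    move: a1 a2' a3 a4; rewrite !ltr_norml => /andP[b1 b2] /andP[b3 b4] /andP[b5 b6] /andP[b7 b8].
    move: H1T H2T h3 ee b1 b2 b3 b4 b5 b6 b7 b8; rewrite /H1 /H2; clear -eps0.
    move=> *; split; lra.
  have := sup_upper_bound hS Sd; rewrite -/T; clear -d0; lra.
move=> t t0.
split.
- rewrite /in_SD; apply: (lim0 _ (e t) (e0 t)) => eps eps0.
  exact: (claim eps eps0 t t0).1.
- rewrite /in_STTC -/k; apply: (lim0 _ (e t) (e0 t)) => eps eps0.
  exact: (claim eps eps0 t t0).2.
Qed.
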